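(* Let $\beta>0$, $\beta_a>0$, $\alpha>0$. Consider the system \[ \begin{aligned} \dot s_a&=-\beta s_a i, & \dot s_r&=-\beta s_r i,\\ \dot i_a&=\beta s_a i-\beta_a s_a i_a-\alpha i_a, & \dot i_r&=\beta s_r i-\beta_a s_a i_r-\alpha i_r,\\ \dot r&=\beta_a s_a i+\alpha i, && \end{aligned} \] where $i=i_a+i_r$, with initial conditions $(s_a(0),s_r(0),i_a(0),i_r(0))=(s_{a0},s_{r0},i_{a0},i_{r0})\in[0,1]^4$ satisfying $s_{a0}+s_{r0}+i_{a0}+i_{r0}=1$ and $r(0)=0$. Let $i_0=i_{a0}+i_{r0}$ and $s_0=s_{a0}+s_{r0}=1-i_0$. Then the peak infection level $i_{\mathrm{pk}}\triangleq\max_{t\ge 0} i(t)$ satisfies \[ i_{\mathrm{pk}}=\begin{cases} 1-\dfrac{\alpha}{\beta}-\dfrac{\beta_a}{\beta}s_{a0}+\dfrac{\alpha}{\beta}\log\dfrac{\alpha}{\beta s_0-\beta_a s_{a0}}, & \text{if } s_{a0}<\dfrac{\beta s_0-\alpha}{\beta_a},\\[3mm] i_0, & \text{if } s_{a0}\ge \dfrac{\beta s_0-\alpha}{\beta_a}. \end{cases} \]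
   Context: This is the A-SIR active cyber defense model: $s_a,s_r$ are the fractions of susceptible active-defender and susceptible non-active nodes, $i_a,i_r$ the fractions of infected active-defender and infected non-active nodes, and $r$ the fraction of permanently protected (recovered) nodes; $\beta$ is the infection rate, $\beta_a$ the active clean-up rate, $\alpha$ the reactive recovery rate. *)

(* Defs.v *)
From Stdlib Require Import Reals.
From Coquelicot Require Import Coquelicot.
Open Scope R_scope.

(* (sa, sr, ia, ir, r) is a solution of the A-SIR system on [0, +oo):
   differentiable on (0,+oo) with the prescribed derivatives, and
   right-continuous at 0 (so the initial values are attained). *)
Definition ASIR_solution (beta beta_a alpha : R)
    (sa sr ia ir r : R -> R) : Prop :=
  (forall t, 0 < t ->
     let i := ia t + ir t in
     is_derive sa t (- beta * sa t * i) /\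
     is_derive sr t (- beta * sr t * i) /\
     is_derive ia t (beta * sa t * i - beta_a * sa t * ia t - alpha * ia t) /\
     is_derive ir t (beta * sr t * i - beta_a * sa t * ir t - alpha * ir t) /\
     is_derive r  t (beta_a * sa t * i + alpha * i)) /\
  filterlim sa (at_right 0) (locally (sa 0)) /\
  filterlim sr (at_right 0) (locally (sr 0)) /\
  filterlim ia (at_right 0) (locally (ia 0)) /\
  filterlim ir (at_right 0) (locally (ir 0)) /\
  filterlim r  (at_right 0) (locally (r 0)).

Definition is_max_on_nonneg (f : R -> R) (v : R) : Prop :=
  (exists t, 0 <= t /\ f t = v) /\ (forall t, 0 <= t -> f t <= v).

(* Main.v *)
Require Import Defs.
From Stdlib Require Import Reals Lra Classical.
From Coquelicot Require Import Coquelicot.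
Open Scope R_scope.

Definition rc (f : R -> R) := filterlim f (at_right 0) (locally (f 0)).

Lemma rc_eps (g : R -> R) l : filterlim g (at_right 0) (locally l) ->
  forall eps, 0 < eps -> exists d, 0 < d /\ forall y, 0 < y < d -> Rabs (g y - l) < eps.
Proof.
intros H eps He.
destruct (H (ball l eps) (locally_ball l (mkposreal eps He))) as [d Hd].
exists d; split; [apply cond_pos|].
intros y [H1 H2]. apply (Hd y); [|exact H1].
unfold ball; simpl; unfold AbsRing_ball, abs, minus, plus, opp; simpl.
change (Rabs (y + - 0) < d). rewrite Ropp_0, Rplus_0_r, Rabs_pos_eq; lra.
Qed.

Lemma rc_plus f g : rc f -> rc g -> rc (fun t => f t + g t).
Proof. intros Hf Hg. exact (filterlim_comp_2 f g Rplus Hf Hg (filterlim_plus (f 0) (g 0))). Qed.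
Lemma rc_mult f g : rc f -> rc g -> rc (fun t => f t * g t).
Proof. intros Hf Hg. exact (filterlim_comp_2 f g Rmult Hf Hg (@filterlim_mult R_AbsRing (f 0) (g 0))). Qed.
Lemma rc_const c : rc (fun _ => c).
Proof. unfold rc. apply filterlim_const. Qed.
Lemma rc_comp f g : rc f -> continuous g (f 0) -> rc (fun t => g (f t)).
Proof. intros Hf Hg. exact (filterlim_comp _ _ _ f g _ _ _ Hf Hg). Qed.
Lemma rc_cont g : continuous g 0 -> rc g.
Proof. intros H. unfold rc. eapply filterlim_filter_le_1; [apply filter_le_within|exact H]. Qed.

Lemma deq (f : R -> R) (x a b : R) : is_derive f x a -> a = b -> is_derive f x b.
Proof. intros H ->; exact H. Qed.
Lemma dplus (f g : R -> R) (x a b : R) : is_derive f x a -> is_derive g x b -> is_derive (fun t => f t + g t) x (a + b).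
Proof. intros. exact (is_derive_plus f g x a b H H0). Qed.
Lemma dmult (f g : R -> R) (x a b : R) : is_derive f x a -> is_derive g x b -> is_derive (fun t => f t * g t) x (a * g x + f x * b).
Proof. intros. exact (@is_derive_mult R_AbsRing f g x a b H H0 Rmult_comm). Qed.
Lemma dcomp (f g : R -> R) (x a b : R) : is_derive f (g x) a -> is_derive g x b -> is_derive (fun t => f (g t)) x (b * a).
Proof. intros. exact (@is_derive_comp R_AbsRing R_NormedModule f g x a b H H0). Qed.
Lemma dconst (c x : R) : is_derive (fun _ => c) x 0.
Proof. apply (@is_derive_const R_AbsRing R_NormedModule). Qed.
Lemma did (x : R) : is_derive (fun t => t) x 1.
Proof. apply (@is_derive_id R_AbsRing). Qed.
Lemma dcont (f : R -> R) (x a : R) : is_derive f x a -> continuity_pt f x.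
Proof. intros H. apply continuity_pt_filterlim. apply (@ex_derive_continuous R_AbsRing R_NormedModule). exists a; exact H. Qed.

Lemma decr (g dg : R -> R) a b : 0 < a <= b -> (forall t, 0 < t -> is_derive g t (dg t)) ->
  (forall t, a <= t <= b -> dg t <= 0) -> g b <= g a.
Proof.
intros Hab Hd Hs.
destruct (MVT_gen g a b dg) as [c [Hc Hc2]].
- intros x Hx. apply Hd. rewrite Rmin_left in Hx by lra. lra.
- intros x Hx. rewrite Rmin_left in Hx by lra. apply (dcont g x (dg x)), Hd. lra.
- rewrite Rmin_left, Rmax_right in Hc by lra.
  assert (dg c * (b - a) <= 0). { apply Rmult_le_0_r; [apply Hs; lra| lra]. } lra.
Qed.

Lemma decr0 (g dg : R -> R) b : 0 <= b -> (forall t, 0 < t -> is_derive g t (dg t)) ->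
  (forall t, 0 < t <= b -> dg t <= 0) -> rc g -> g b <= g 0.
Proof.
intros Hb Hd Hs Hr.
destruct (Req_dec b 0) as [->|Hb0]; [lra|].
destruct (Rle_lt_dec (g b) (g 0)) as [|Hc]; [auto|exfalso].
destruct (rc_eps g (g 0) Hr (g b - g 0)) as [d [Hd0 Hdd]]; [lra|].
set (a := Rmin (d/2) b).
assert (0 < a <= b) by (unfold a; apply Rmin_case_strong; lra).
assert (a < d) by (unfold a; apply Rmin_case_strong; lra).
assert (g b <= g a) by (apply (decr g dg); auto; intros; apply Hs; lra).
specialize (Hdd a ltac:(lra)). apply Rabs_def2 in Hdd. lra.
Qed.

Lemma incr0 (g dg : R -> R) b : 0 <= b -> (forall t, 0 < t -> is_derive g t (dg t)) ->
  (forall t, 0 < t <= b -> 0 <= dg t) -> rc g -> g 0 <= g b.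
Proof.
intros Hb Hd Hs Hr.
assert (- g b <= - g 0); [|lra].
apply (decr0 (fun t => - g t) (fun t => - dg t) b Hb).
- intros t Ht. apply (is_derive_opp g t (dg t)), Hd, Ht.
- intros t Ht. specialize (Hs t Ht). lra.
- apply (rc_comp g Ropp Hr). apply continuity_pt_filterlim. apply continuity_pt_opp, continuity_pt_id.
Qed.

Lemma const0 (g dg : R -> R) t : 0 <= t -> (forall t, 0 < t -> is_derive g t (dg t)) ->
  (forall t, 0 < t -> dg t = 0) -> rc g -> g t = g 0.
Proof.
intros Ht Hd Hz Hr. apply Rle_antisym.
- apply (decr0 g dg t); auto. intros; rewrite Hz; lra.
- apply (incr0 g dg t); auto. intros; rewrite Hz; lra.
Qed.

Lemma bound (h : R -> R) T : 0 < T -> rc h -> (forall t, 0 < t -> continuity_pt h t) ->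
  exists M, 0 <= M /\ forall t, 0 < t <= T -> Rabs (h t) <= M.
Proof.
intros HT Hr Hc.
destruct (rc_eps h (h 0) Hr 1) as [d [Hd Hdd]]; [lra|].
set (a := Rmin (d/2) T).
assert (0 < a <= T) by (unfold a; apply Rmin_case_strong; lra).
assert (a < d) by (unfold a; apply Rmin_case_strong; lra).
assert (Hca : forall c, a <= c <= T -> continuity_pt (fun t => Rabs (h t)) c).
{ intros c Hc'. apply continuity_pt_filterlim.
  apply (filterlim_comp _ _ _ h Rabs _ (locally (h c)) _). apply continuity_pt_filterlim, Hc; lra.
  apply continuous_Rabs. }
destruct (continuity_ab_maj (fun t => Rabs (h t)) a T ltac:(lra) Hca) as [Mx [HM _]].
exists (Rmax (Rabs (h Mx)) (Rabs (h 0) + 1)). split.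
- apply Rle_trans with (Rabs (h Mx)); [apply Rabs_pos|apply Rmax_l].
- intros t Ht. destruct (Rlt_le_dec t a).
  + specialize (Hdd t ltac:(lra)).
    assert (Rabs (h t) <= Rabs (h 0) + 1).
    { assert (Rabs (h t) <= Rabs (h t - h 0) + Rabs (h 0)).
      { replace (h t) with ((h t - h 0) + h 0) at 1 by ring. apply Rabs_triang. } lra. }
    apply Rle_trans with (Rabs (h 0) + 1); [auto|apply Rmax_r].
  + apply Rle_trans with (Rabs (h Mx)); [apply (HM t); lra|apply Rmax_l].
Qed.

Lemma dexp (c x : R) : is_derive (fun t => exp (c * t)) x (c * exp (c * x)).
Proof. auto_derive; [auto| ring]. Qed.

Lemma rc_exp c : rc (fun t => exp (c * t)).
Proof. apply rc_cont. apply continuity_pt_filterlim.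
  apply (dcont _ _ _ (dexp c 0)). Qed.

Lemma sq_est (f h : R -> R) T M c : 0 < T -> 0 <= M ->
  (forall t, 0 < t -> is_derive f t (h t * f t)) -> rc f ->
  (forall t, 0 < t <= T -> Rabs (h t) <= M) ->
  (c = 2 * M \/ c = - 2 * M) ->
  let psi := fun t => f t * f t * exp (c * t) in
  (c = 2 * M -> psi 0 <= psi T) /\ (c = - 2 * M -> psi T <= psi 0).
Proof.
intros HT HM Hd Hr Hb Hc psi.
assert (Hdp : forall t, 0 < t -> is_derive psi t (f t * f t * exp (c * t) * (2 * h t + c))).
{ intros t Ht. unfold psi. eapply deq.
  - apply dmult; [apply dmult; apply Hd; auto| apply dexp].
  - cbv beta; ring. }
assert (Hrp : rc psi) by (apply rc_mult; [apply rc_mult; auto|apply rc_exp]).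
split; intros Hc'.
- apply (incr0 psi (fun t => f t * f t * exp (c * t) * (2 * h t + c)) T); auto; [lra|]. intros t Ht.
  specialize (Hb t Ht). assert (-M <= h t <= M) by (unfold Rabs in Hb; destruct (Rcase_abs (h t)); lra). rewrite Hc'.
  apply Rmult_le_pos; [apply Rmult_le_pos; [apply Rle_0_sqr|apply Rlt_le, exp_pos]|lra].
- apply (decr0 psi (fun t => f t * f t * exp (c * t) * (2 * h t + c)) T); auto; [lra|]. intros t Ht.
  specialize (Hb t Ht). assert (-M <= h t <= M) by (unfold Rabs in Hb; destruct (Rcase_abs (h t)); lra). rewrite Hc'.
  apply Rmult_le_0_l; [apply Rmult_le_pos; [apply Rle_0_sqr|apply Rlt_le, exp_pos]|lra].
Qed.

Lemma lin_sol (f h : R -> R) : (forall t, 0 < t -> is_derive f t (h t * f t)) -> rc f -> rc h ->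
  (forall t, 0 < t -> continuity_pt h t) ->
  (f 0 = 0 -> forall t, 0 <= t -> f t = 0) /\ (0 < f 0 -> forall t, 0 <= t -> 0 < f t).
Proof.
intros Hd Hr Hrh Hc.
assert (key : forall T, 0 < T -> (f 0 = 0 -> f T = 0) /\ (0 < f 0 -> f T <> 0)).
{ intros T HT. destruct (bound h T HT Hrh Hc) as [M [HM Hb]].
  destruct (sq_est f h T M (2*M) HT HM Hd Hr Hb (or_introl eq_refl)) as [H1 _].
  destruct (sq_est f h T M (-2*M) HT HM Hd Hr Hb (or_intror eq_refl)) as [_ H2].
  specialize (H1 eq_refl). specialize (H2 eq_refl).
  rewrite Rmult_0_r, exp_0 in H1, H2.
  pose proof (exp_pos (2*M*T)). pose proof (exp_pos (-2*M*T)).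
  split.
  - intros Hz0. rewrite Hz0 in H2.
    assert (f T * f T <= 0).
    { apply Rmult_le_reg_r with (exp (-2*M*T)); auto. lra. }
    nra.
  - intros Hp0 HfT. rewrite HfT in H1. nra. }
split.
- intros H0 t Ht. destruct (Req_dec t 0) as [->|]; auto. apply key; auto; lra.
- intros H0 t Ht. destruct (Req_dec t 0) as [->|]; auto.
  destruct (Rlt_le_dec 0 (f t)) as [|Hn]; auto. exfalso.
  destruct (Req_dec (f t) 0) as [Hz|Hz]. { apply (proj2 (key t ltac:(lra)) H0 Hz). }
  destruct (rc_eps f (f 0) Hr (f 0)) as [d [Hd0 Hdd]]; [lra|].
  set (a := Rmin (d/2) (t/2)).
  assert (0 < a < t) by (unfold a; apply Rmin_case_strong; lra).
  assert (a < d) by (unfold a; apply Rmin_case_strong; lra).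
  specialize (Hdd a ltac:(lra)). apply Rabs_def2 in Hdd.
  destruct (Ranalysis5.IVT_interv (fun x => - f x) a t) as [z [Hz1 Hz2]].
  + intros b Hb. apply continuity_pt_opp. apply (dcont f b _ (Hd b ltac:(lra))).
  + lra.
  + lra.
  + lra.
  + apply (proj2 (key z ltac:(lra)) H0). lra.
Qed.

Lemma ln_le_m1 x : 0 < x -> ln x <= x - 1.
Proof. intros H. pose proof (exp_ineq1_le (ln x)). rewrite exp_ln in H0 by exact H. lra. Qed.

Lemma ln_div' x y : 0 < x -> 0 < y -> ln (x / y) = ln x - ln y.
Proof. intros. unfold Rdiv. rewrite ln_mult. rewrite ln_Rinv by auto. ring. auto. apply Rinv_0_lt_compat; auto. Qed.

Lemma numC2 b a W0 s0 S : 0<b -> 0<a -> 0<s0 -> 0<S<=s0 -> W0 <= a ->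
  W0/(s0*b)*(s0 - S) + a/b*(ln S - ln s0) <= 0.
Proof.
intros Hb Ha Hs0 HS HW.
assert (H1 : ln S - ln s0 <= S/s0 - 1).
{ rewrite <- ln_div' by lra. apply ln_le_m1. apply Rdiv_lt_0_compat; lra. }
assert (H2 : a/b*(ln S - ln s0) <= a/b*(S/s0 - 1)).
{ apply Rmult_le_compat_l; [apply Rlt_le, Rdiv_lt_0_compat; lra|exact H1]. }
assert (H3 : W0/(s0*b)*(s0 - S) + a/b*(S/s0 - 1) = (s0 - S) * (W0 - a) / (s0 * b)) by (field; lra).
assert (H4 : (s0 - S) * (W0 - a) / (s0 * b) <= 0).
{ unfold Rdiv. assert (0 < /(s0*b)) by (apply Rinv_0_lt_compat; nra).
  assert ((s0 - S) * (W0 - a) <= 0) by nra. nra. }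
lra.
Qed.

Lemma numLow b a W0 s0 S : 0<b -> 0<a -> 0<s0 -> a < W0 -> a*s0/W0 < S <= s0 ->
  0 <= W0/(s0*b)*(s0 - S) + a/b*(ln S - ln s0).
Proof.
intros Hb Ha Hs0 HW HS.
assert (HS0 : 0 < S). { assert (0 < a*s0/W0) by (apply Rdiv_lt_0_compat; nra). lra. }
assert (HSW : a * s0 < W0 * S).
{ destruct HS as [HS _]. apply (Rmult_lt_compat_r W0) in HS; [|lra].
  replace (a*s0/W0*W0) with (a*s0) in HS by (field; lra). lra. }
assert (H1 : ln s0 - ln S <= s0/S - 1).
{ rewrite <- ln_div' by lra. apply ln_le_m1. apply Rdiv_lt_0_compat; lra. }
assert (H2 : a/b*(ln s0 - ln S) <= a/b*(s0/S - 1)).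
{ apply Rmult_le_compat_l; [apply Rlt_le, Rdiv_lt_0_compat; lra|exact H1]. }
assert (H3 : W0/(s0*b)*(s0 - S) - a/b*(s0/S - 1) = (s0 - S) * (W0 * S - a * s0) / (s0 * b * S)) by (field; lra).
assert (H4 : 0 <= (s0 - S) * (W0 * S - a * s0) / (s0 * b * S)).
{ unfold Rdiv. apply Rmult_le_pos.
  - apply Rmult_le_pos; lra.
  - apply Rlt_le, Rinv_0_lt_compat. apply Rmult_lt_0_compat; [nra|lra]. }
lra.
Qed.

Lemma cont_lin (X Y : R -> R) c1 c2 c3 t dX dY : is_derive X t dX -> is_derive Y t dY ->
  continuity_pt (fun u => c1 * X u + c2 * Y u + c3) t.
Proof.
intros HX HY. eapply dcont. apply dplus; [apply dplus|apply dconst]; (apply dmult; [apply dconst|eassumption]).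
Qed.
Lemma rc_lin (X Y : R -> R) c1 c2 c3 : rc X -> rc Y -> rc (fun u => c1 * X u + c2 * Y u + c3).
Proof.
intros HX HY. apply rc_plus; [apply rc_plus|apply rc_const]; (apply rc_mult; [apply rc_const|assumption]).
Qed.

Theorem theorem4 (beta beta_a alpha : R) (sa sr ia ir r : R -> R)
  (sa0 sr0 ia0 ir0 : R) :
  0 < beta -> 0 < beta_a -> 0 < alpha ->
  0 <= sa0 <= 1 -> 0 <= sr0 <= 1 -> 0 <= ia0 <= 1 -> 0 <= ir0 <= 1 ->
  sa0 + sr0 + ia0 + ir0 = 1 ->
  0 < ia0 + ir0 ->
  sa 0 = sa0 -> sr 0 = sr0 -> ia 0 = ia0 -> ir 0 = ir0 -> r 0 = 0 ->
  ASIR_solution beta beta_a alpha sa sr ia ir r ->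
  let i0 := ia0 + ir0 in
  let s0 := sa0 + sr0 in
  is_max_on_nonneg (fun t => ia t + ir t)
    (if Rlt_dec sa0 ((beta * s0 - alpha) / beta_a)
     then 1 - alpha / beta - beta_a / beta * sa0
          + alpha / beta * ln (alpha / (beta * s0 - beta_a * sa0))
     else i0).
Proof.
intros Hb Hba Hal Hsa Hsr Hia Hir Hsum Hi0 E1 E2 E3 E4 E5 [Hd [Rsa [Rsr [Ria [Rir _]]]]] i0 s0.
set (i := fun t => ia t + ir t).
set (s := fun t => sa t + sr t).
assert (Hi0' : i 0 = i0) by (unfold i, i0; rewrite E3, E4; ring).
assert (Hs0' : s 0 = s0) by (unfold s, s0; rewrite E1, E2; ring).
set (hi := fun u => beta * s u + (- beta_a) * sa u + (- alpha)).
set (hs := fun u => (- beta) * i u + 0 * i u + 0).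
assert (Dall : forall t, 0 < t ->
  is_derive i t (hi t * i t) /\ is_derive s t (hs t * s t) /\ is_derive sa t (hs t * sa t)
  /\ ex_derive sa t /\ ex_derive s t /\ ex_derive i t).
{ intros t Ht. pose proof (Hd t Ht) as HH. cbv zeta in HH.
  destruct HH as [D1 [D2 [D3 [D4 _]]]].
  assert (Di : is_derive i t (hi t * i t)).
  { eapply deq; [apply dplus; [exact D3|exact D4]|unfold hi, i, s; ring]. }
  assert (Ds : is_derive s t (hs t * s t)).
  { eapply deq; [apply dplus; [exact D1|exact D2]|unfold hs, i, s; ring]. }
  split; [exact Di|]. split; [exact Ds|]. split.
  { eapply deq; [exact D1|unfold hs, i; ring]. }
  split; [eexists; exact D1|]. split; [eexists; exact Ds|eexists; exact Di]. }
assert (Ri : rc i) by (apply rc_plus; auto).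
assert (Rs : rc s) by (apply rc_plus; auto).
assert (Rhi : rc hi) by (apply rc_lin; auto).
assert (Rhs : rc hs) by (apply rc_lin; auto).
assert (Chi : forall t, 0 < t -> continuity_pt hi t).
{ intros t Ht. destruct (Dall t Ht) as [_ [_ [_ [[a1 H1] [[a2 H2] _]]]]]. eapply cont_lin; eauto. }
assert (Chs : forall t, 0 < t -> continuity_pt hs t).
{ intros t Ht. destruct (Dall t Ht) as [_ [_ [_ [_ [_ [a3 H3]]]]]]. eapply cont_lin; eauto. }
assert (Ipos : forall t, 0 <= t -> 0 < i t).
{ apply (proj2 (lin_sol i hi (fun t Ht => proj1 (Dall t Ht)) Ri Rhi Chi)). rewrite Hi0'. unfold i0. lra. }
assert (Hs0pos : 0 <= s0) by (unfold s0; lra).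
assert (Hi0p : 0 < i0) by (unfold i0; lra).
destruct (Req_dec s0 0) as [Z|NZ].
{
  assert (Sz : forall t, 0 <= t -> s t = 0).
  { apply (proj1 (lin_sol s hs (fun t Ht => proj1 (proj2 (Dall t Ht))) Rs Rhs Chs)). rewrite Hs0'; exact Z. }
  assert (Saz : forall t, 0 <= t -> sa t = 0).
  { apply (proj1 (lin_sol sa hs (fun t Ht => proj1 (proj2 (proj2 (Dall t Ht)))) Rsa Rhs Chs)).
    rewrite E1. unfold s0 in Z. lra. }
  destruct (Rlt_dec sa0 ((beta * s0 - alpha) / beta_a)) as [C|C].
  { exfalso. rewrite Z in C. assert (0 < / beta_a) by (apply Rinv_0_lt_compat; lra).
    unfold Rdiv in C. replace (beta * 0 - alpha) with (- alpha) in C by ring. nra. }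
  split.
  { exists 0. split; [lra|exact Hi0']. }
  intros t Ht. rewrite <- Hi0'. apply (decr0 i (fun t => hi t * i t) t Ht); auto.
  { intros u Hu. exact (proj1 (Dall u Hu)). }
  intros u Hu. unfold hi. rewrite Sz, Saz by lra. assert (0 < i u) by (apply Ipos; lra). nra. }
assert (Hs0p : 0 < s0) by lra.
assert (Spos : forall t, 0 <= t -> 0 < s t).
{ apply (proj2 (lin_sol s hs (fun t Ht => proj1 (proj2 (Dall t Ht))) Rs Rhs Chs)). lra. }
assert (Sle : forall t, 0 <= t -> s t <= s0).
{ intros t Ht. rewrite <- Hs0'. apply (decr0 s (fun t => hs t * s t) t Ht); auto.
  { intros u Hu. exact (proj1 (proj2 (Dall u Hu))). }
  intros u Hu. unfold hs; cbv beta. assert (0 < i u) by (apply Ipos; lra). assert (0 < s u) by (apply Spos; lra). assert (0 < beta * (i u * s u)) by (apply Rmult_lt_0_compat; [lra|nra]). nra. }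
set (W0 := beta * s0 - beta_a * sa0).
set (Q := fun u => (beta * s u + (- beta_a) * sa u) * s0 + (- W0) * s u).
assert (DQ : forall t, 0 < t -> is_derive Q t (hs t * Q t)).
{ intros t Ht. destruct (Dall t Ht) as [_ [Ds [Dsa _]]]. eapply deq.
  + apply dplus; [apply dmult; [apply dplus; (apply dmult; [apply dconst|eassumption])|apply dconst]
                 |apply dmult; [apply dconst|eassumption]].
  + unfold Q; cbv beta; ring. }
assert (RQ : rc Q).
{ apply rc_plus; [apply rc_mult; [apply rc_plus; (apply rc_mult; [apply rc_const|assumption])|apply rc_const]
                 |apply rc_mult; [apply rc_const|assumption]]. }
assert (Qz : forall t, 0 <= t -> Q t = 0).
{ apply (proj1 (lin_sol Q hs DQ RQ Rhs Chs)).
  unfold Q. rewrite Hs0', E1. unfold W0. ring. }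
set (c1 := W0 / (s0 * beta)).
set (V2 := fun u => i u + c1 * s u + (- (alpha / beta)) * ln (s u)).
assert (DV : forall t, 0 < t -> is_derive V2 t (i t * Q t / s0)).
{ intros t Ht. destruct (Dall t Ht) as [Di [Ds _]].
  assert (0 < s t) by (apply Spos; lra). eapply deq.
  + apply dplus; [apply dplus; [exact Di|apply dmult; [apply dconst|exact Ds]]
                 |apply dmult; [apply dconst|apply dcomp; [apply is_derive_ln; lra|exact Ds]]].
  + unfold hi, hs, Q, c1; cbv beta. field. lra. }
assert (RV : rc V2).
{ apply rc_plus; [apply rc_plus; [exact Ri|apply rc_mult; [apply rc_const|exact Rs]]
                 |apply rc_mult; [apply rc_const|apply rc_comp; [exact Rs|apply continuous_ln; lra]]]. }
assert (Irel : forall t, 0 <= t -> i t = i0 + c1 * (s0 - s t) + alpha / beta * (ln (s t) - ln s0)).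
{ intros t Ht. pose proof (const0 V2 (fun t => i t * Q t / s0) t Ht DV) as HV.
  assert (V2 t = V2 0).
  { apply HV; auto. intros u Hu. rewrite Qz by lra. field. lra. }
  unfold V2 in H. rewrite Hi0', Hs0' in H. lra. }
assert (Hsum' : i0 = 1 - s0) by (unfold i0, s0; lra).
destruct (Rlt_dec sa0 ((beta * s0 - alpha) / beta_a)) as [C|C].
2:{ assert (CW : W0 <= alpha).
    { unfold W0. destruct (Rle_lt_dec (beta * s0 - beta_a * sa0) alpha) as [|Hc]; auto.
      exfalso. apply C. apply (Rmult_lt_reg_l beta_a); auto.
      replace (beta_a * ((beta * s0 - alpha) / beta_a)) with (beta * s0 - alpha) by (field; lra). lra. }
    split.
    { exists 0. split; [lra|exact Hi0']. }
    intros t Ht. rewrite Irel by exact Ht.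
    pose proof (numC2 beta alpha W0 s0 (s t) Hb Hal Hs0p (conj (Spos t Ht) (Sle t Ht)) CW).
    unfold c1. lra. }
assert (CW : alpha < W0).
{ apply (Rmult_lt_compat_l beta_a) in C; auto.
  replace (beta_a * ((beta * s0 - alpha) / beta_a)) with (beta * s0 - alpha) in C by (field; lra).
  unfold W0. lra. }
set (P := 1 - alpha / beta - beta_a / beta * sa0 + alpha / beta * ln (alpha / W0)).
assert (Ident : forall t, 0 <= t -> i t - P =
   alpha / beta * (ln (W0 * s t / (s0 * alpha)) - W0 * s t / (s0 * alpha) + 1)).
{ intros t Ht. assert (0 < s t) by (apply Spos; exact Ht).
  rewrite Irel by exact Ht. unfold P.
  rewrite ln_div' by (try apply Rmult_lt_0_compat; lra).
  rewrite ln_div' by (try apply Rmult_lt_0_compat; lra).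
  rewrite !ln_mult by lra.
  rewrite Hsum'. unfold c1, W0. field. lra. }
assert (HW0 : 0 < W0) by lra.
split.
2:{ intros t Ht. assert (0 < s t) by (apply Spos; exact Ht).
    pose proof (Ident t Ht).
    assert (0 < W0 * s t / (s0 * alpha)) by (apply Rdiv_lt_0_compat; apply Rmult_lt_0_compat; lra).
    pose proof (ln_le_m1 _ H1).
    assert (alpha / beta * (ln (W0 * s t / (s0 * alpha)) - W0 * s t / (s0 * alpha) + 1) <= 0).
    { assert (0 < alpha / beta) by (apply Rdiv_lt_0_compat; lra). nra. }
    lra. }
set (sst := alpha * s0 / W0).
assert (Hsst : 0 < sst < s0).
{ unfold sst. split; [apply Rdiv_lt_0_compat; nra|].
  apply (Rmult_lt_reg_r W0); auto. replace (alpha * s0 / W0 * W0) with (alpha * s0) by (field; lra). nra. }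
assert (Hat : forall c, 0 <= c -> s c = sst -> i c = P).
{ intros c Hc Hsc. pose proof (Ident c Hc) as HI. rewrite Hsc in HI. unfold sst in HI.
  replace (W0 * (alpha * s0 / W0) / (s0 * alpha)) with 1 in HI by (field; lra).
  rewrite ln_1 in HI. lra. }
destruct (classic (exists T, 0 <= T /\ s T <= sst)) as [[T [HT HsT]]|Hno].
- destruct (Req_dec (s T) sst) as [Heq|Hne].
  { exists T. split; auto. }
  assert (HT0 : 0 < T).
  { destruct (Req_dec T 0) as [->|]; [rewrite Hs0' in HsT; lra|lra]. }
  destruct (rc_eps s (s 0) Rs (s0 - sst)) as [d [Hd0 Hdd]]; [lra|].
  set (a := Rmin (d/2) (T/2)).
  assert (0 < a < T) by (unfold a; apply Rmin_case_strong; lra).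
  assert (a < d) by (unfold a; apply Rmin_case_strong; lra).
  specialize (Hdd a ltac:(lra)). rewrite Hs0' in Hdd. apply Rabs_def2 in Hdd.
  destruct (Ranalysis5.IVT_interv (fun x => sst - s x) a T) as [z [Hz1 Hz2]].
  + intros b Hb'. apply continuity_pt_minus; [apply continuity_pt_const; intros ? ?; reflexivity|].
    destruct (Dall b ltac:(lra)) as [_ [Ds _]]. exact (dcont _ _ _ Ds).
  + lra.
  + lra.
  + lra.
  + exists z. split; [lra|]. apply Hat; lra.
- exfalso.
  assert (Hgt : forall t, 0 <= t -> sst < s t).
  { intros t Ht. destruct (Rlt_le_dec sst (s t)); auto. exfalso. apply Hno. exists t. auto. }
  assert (Ige : forall t, 0 <= t -> i0 <= i t).
  { intros t Ht. rewrite Irel by exact Ht.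
    pose proof (numLow beta alpha W0 s0 (s t) Hb Hal Hs0p CW (conj (Hgt t Ht) (Sle t Ht))).
    unfold c1. lra. }
  set (G := fun u => ln (s u) + beta * i0 * u).
  assert (DG : forall t, 0 < t -> is_derive G t (- beta * i t + beta * i0)).
  { intros t Ht. destruct (Dall t Ht) as [_ [Ds _]].
    assert (0 < s t) by (apply Spos; lra). eapply deq.
    + apply dplus; [apply dcomp; [apply is_derive_ln; lra|exact Ds]|apply dmult; [apply dconst|apply did]].
    + unfold hs; cbv beta. field. lra. }
  assert (RG : rc G).
  { apply rc_plus; [apply rc_comp; [exact Rs|apply continuous_ln; lra]
                   |apply rc_mult; [apply rc_const|apply rc_cont, continuous_id]]. }
  assert (Hl : ln sst < ln s0) by (apply ln_increasing; lra).
  assert (Hbi : 0 < beta * i0) by nra.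
  set (T := (ln s0 - ln sst) / (beta * i0) + 1).
  assert (HT : 0 <= T).
  { unfold T. assert (0 < (ln s0 - ln sst) / (beta * i0)) by (apply Rdiv_lt_0_compat; lra). lra. }
  assert (GT : G T <= G 0).
  { apply (decr0 G (fun t => - beta * i t + beta * i0) T HT DG); auto.
    intros u Hu. pose proof (Ige u ltac:(lra)). nra. }
  unfold G in GT. rewrite Hs0', Rmult_0_r, Rplus_0_r in GT.
  assert (beta * i0 * T = ln s0 - ln sst + beta * i0) by (unfold T; field; lra).
  pose proof (ln_increasing sst (s T) ltac:(lra) (Hgt T HT)).
  lra.
Qed.
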